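(* Let $\alpha\in(0,\kappa(\mathbf{A})^{-1/2})$ and let $\lambda>0$ satisfy $\alpha\le\kappa(\mathbf{A})^{-1/2}(1-\|\mathbf{A}\|\lambda^2)^{1/2}$. Let $\Lambda=\Lambda_0\times\cdots\times\Lambda_J\subset\mathcal{G}$ be a finite product set and $\mathbf{w}_\Lambda\in\ell_2(\mathcal{G})$ with $\operatorname{supp}\mathbf{w}_\Lambda\subseteq\Lambda$. Assume that $\pi^{(0)}(\mathbf{u})\in\mathcal{A}^{s_1}(\mathcal{G}_0)$ and $\pi^{(j)}(\mathbf{u})\in\mathcal{A}^{s_2}(\mathcal{G}_j)$ for $j=1,\dots,J$, with $s_1,s_2>0$. Let $\Lambda^*=\Lambda^*_0\times\cdots\times\Lambda^*_J\subset\mathcal{G}$ be a minimizer of $\sum_{j=0}^J\#(\Lambda^*_j\setminus\Lambda_j)$ among the product sets satisfying \[\|\mathbf{R}_{\Lambda^*}(\mathbf{A}\mathbf{w}_\Lambda-\mathbf{f})\|\ge\alpha\|\mathbf{A}\mathbf{w}_\Lambda-\mathbf{f}\|.\] Then \[ \sum_{j=0}^J\#(\Lambda^*_j\setminus\Lambda_j)\le 2C^{1/s_1}\|\mathbf{A}\mathbf{w}_\Lambda-\mathbf{f}\|^{-1/s_1}\|\pi^{(0)}(\mathbf{u})\|_{\mathcal{A}^{s_1}}^{1/s_1}+2C^{1/s_2}\|\mathbf{A}\mathbf{w}_\Lambda-\mathbf{f}\|^{-1/s_2}\sum_{j=1}^J\|\pi^{(j)}(\mathbf{u})\|_{\mathcal{A}^{s_2}}^{1/s_2},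 \] where $C=(J+1)\sqrt{\|\mathbf{A}\|}/\lambda$.
   Context: Parametric problem: $D\subset\mathbb{R}^d$ a domain, $V=H^1_0(D)$, $f\in L_2(D)$, $a(x,y)=\bar a(x)+\sum_{j\ge1}y_j\theta_j(x)$ with $\bar a,\theta_j\in L_\infty(D)$, $y\in Y=[-1,1]^{\mathbb{N}}$, and $\bar a-\sum_j|\theta_j|\ge r>0$. Let $\sigma$ be the uniform product probability measure on $Y$, $\mathcal{F}=\{\nu\in\mathbb{N}_0^{\mathbb{N}}:$ finitely many nonzero entries$\}$, $L_\nu(y)=\prod_i L_{\nu_i}(y_i)$ the $L_2(Y;\sigma)$-orthonormal product Legendre polynomials, and $\{\psi_\lambda\}_{\lambda\in\mathcal{S}}$ a Riesz basis of $V$. The operator $\mathbf{A}$ on $\ell_2(\mathcal{F}\times\mathcal{S})$ has entries $\mathbf{A}_{(\nu,\lambda),(\nu',\lambda')}=\int_Y\int_D a(x,y)\nabla\psi_{\lambda'}\cdot\nabla\psi_\lambda\,L_\nu L_{\nu'}\,dx\,d\sigma(y)$, and $\mathbf{f}_{(\nu,\lambda)}=\int_D f\psi_\lambda\,dx\int_Y L_\nu\,d\sigma$; $\mathbf{A}$ is bounded, symmetric and positive definite on $\ell_2$, $\kappa(\mathbf{A})=\|\mathbf{A}\|\|\mathbf{A}^{-1}\|$, and $\mathbf{u}$ is the solution of $\mathbf{A}\mathbf{u}=\mathbf{f}$. Fix $J\ge1$ and identify $\mathcal{F}\times\mathcal{S}$ with $\mathcal{G}=\mathcal{G}_0\times\mathcal{G}_1\times\cdots\times\mathcal{G}_J$,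 where $\mathcal{G}_0=\mathcal{F}\times\mathcal{S}$ (index $(\bar\nu,\lambda)$ with $\bar\nu=(\nu_{J+1},\nu_{J+2},\dots)$ the tail multi-index) and $\mathcal{G}_j=\mathbb{N}_0$ (index $\nu_j$) for $j=1,\dots,J$. $\|\cdot\|$ denotes the $\ell_2$ norm; a product set is $\Lambda_0\times\cdots\times\Lambda_J$ with $\Lambda_j\subseteq\mathcal{G}_j$; $\mathbf{R}_\Lambda$ is pointwise multiplication by the indicator of $\Lambda$. Contractions of $\mathbf{v}\in\ell_2(\mathcal{G})$: $\pi^{(0)}(\mathbf{v})\in\ell_2(\mathcal{G}_0)$ with $\pi^{(0)}_{(\bar\nu,\lambda)}(\mathbf{v})=(\sum_{(\nu_1,\dots,\nu_J)}|\mathbf{v}_{(\bar\nu,\lambda),\nu_1,\dots,\nu_J}|^2)^{1/2}$, and for $j=1,\dots,J$, $\pi^{(j)}(\mathbf{v})\in\ell_2(\mathcal{G}_j)$ with $\pi^{(j)}_{\nu_j}(\mathbf{v})=(\sum_{(\bar\nu,\lambda)}\sum_{\nu_i,\,i\neq j}|\mathbf{v}_{(\bar\nu,\lambda),\nu_1,\dots,\nu_J}|^2)^{1/2}$. Approximation classes: for a countable set $\mathcal{H}$ and $s>0$, $\mathcal{A}^s(\mathcal{H})$ is the set of $\mathbf{v}\in\ell_2(\mathcal{H})$ with $\|\mathbf{v}\|_{\mathcal{A}^s}:=\sup_{N\in\mathbb{N}_0}(N+1)^s\inf_{\#\operatorname{supp}\mathbf{v}_N\le N}\|\mathbf{v}-\mathbf{v}_N\|<\infty$.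 *)

(* Defs.v *)
From mathcomp Require Import all_boot all_order all_algebra.
From mathcomp Require Import all_classical all_reals all_analysis.
Set Implicit Arguments. Unset Strict Implicit. Unset Printing Implicit Defensive.
Import Order.TTheory GRing.Theory Num.Theory.
Local Open Scope classical_set_scope.
Local Open Scope ring_scope.

Section L2.
Variable R : realType.

Definition sqnorm (H : choiceType) (v : H -> R) : \bar R :=
  \esum_(x in [set: H]) ((v x) ^+ 2)%:E.

Definition inl2 (H : choiceType) (v : H -> R) : Prop := (sqnorm v < +oo)%E.

Definition l2norm (H : choiceType) (v : H -> R) : R := Num.sqrt (fine (sqnorm v)).

Definition l2inner (H : choiceType) (v w : H -> R) : R :=
  (l2norm (fun x => v x + w x) ^+ 2 - l2norm (fun x => v x - w x) ^+ 2) / 4.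

Definition opnorm (H : choiceType) (A : (H -> R) -> (H -> R)) : R :=
  sup [set l2norm (A v) | v in [set v | inl2 v /\ l2norm v <= 1]].

Definition supp_le (H : countType) (w : H -> R) (N : nat) : Prop :=
  exists s : seq H, (size s <= N)%N /\ forall x, w x != 0 -> x \in s.

Definition best_nterm (H : countType) (v : H -> R) (N : nat) : R :=
  inf [set l2norm (fun x => v x - w x) | w in [set w | supp_le w N]].

Definition as_norm (H : countType) (s : R) (v : H -> R) : \bar R :=
  ereal_sup [set ((N.+1%:R `^ s) * best_nterm v N)%:E | N in [set: nat]].

Definition inAs (H : countType) (s : R) (v : H -> R) : Prop :=
  inl2 v /\ (as_norm s v < +oo)%E.

End L2.

(* The index set G = G_0 x G_1 x ... x G_J with G_j = nat (j = 1..J);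
   the components G_1..G_J are stored as a J-tuple, component j (1<=j<=J)
   being tnth t (j-1) with (j-1) : 'I_J. *)
Definition Gidx (G0 : countType) (J : nat) : countType := (G0 * (J.-tuple nat))%type.

Section Contr.
Variables (R : realType) (G0 : countType) (J : nat).

Definition pi0 (v : Gidx G0 J -> R) : G0 -> R :=
  fun g0 => Num.sqrt (fine (\esum_(t in [set: J.-tuple nat]) ((v (g0, t)) ^+ 2)%:E)).

(* pi^(j)(v)_(n) = (sum over all indices with nu_j = n of |v|^2)^(1/2),
   here for j = val k + 1 with k : 'I_J *)
Definition pij (k : 'I_J) (v : Gidx G0 J -> R) : nat -> R :=
  fun n => Num.sqrt (fine (\esum_(x in [set x : Gidx G0 J | tnth x.2 k = n])
                               ((v x) ^+ 2)%:E)).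

Definition in_prod (L0 : seq G0) (L : 'I_J -> seq nat) (x : Gidx G0 J) : bool :=
  (x.1 \in L0) && [forall k : 'I_J, tnth x.2 k \in L k].

Definition restr (L0 : seq G0) (L : 'I_J -> seq nat) (v : Gidx G0 J -> R) :
  Gidx G0 J -> R := fun x => if in_prod L0 L x then v x else 0.

Definition card_diff (T : eqType) (s t : seq T) : nat :=
  size (undup [seq x <- s | x \notin t]).

Definition prod_cost (Ls0 : seq G0) (Ls : 'I_J -> seq nat)
    (L0 : seq G0) (L : 'I_J -> seq nat) : nat :=
  (card_diff Ls0 L0 + \sum_(k < J) card_diff (Ls k) (L k))%N.

End Contr.

(* Main.v *)
Require Import Defs.
From mathcomp Require Import all_boot all_order all_algebra.
From mathcomp Require Import all_classical all_reals all_analysis.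
From mathcomp Require Import ring lra.
Import Order.TTheory GRing.Theory Num.Theory.
Local Open Scope classical_set_scope.
Local Open Scope ring_scope.
Set Implicit Arguments. Unset Strict Implicit. Unset Printing Implicit Defensive.

Section L2facts.
Variables (R : realType) (H : choiceType).
Implicit Types (v w : H -> R).

Definition S v : R := fine (sqnorm v).

Lemma sqnorm_ge0 v : (0 <= sqnorm v)%E.
Proof. by apply: esum_ge0 => x _; rewrite lee_fin sqr_ge0. Qed.

Lemma S_ge0 v : 0 <= S v.
Proof. exact: fine_ge0 (sqnorm_ge0 v). Qed.

Lemma sqnormE v : inl2 v -> sqnorm v = (S v)%:E.
Proof. by move=> h; rewrite /S fineK // ge0_fin_numE // sqnorm_ge0. Qed.

Lemma l2normE v : l2norm v ^+ 2 = S v.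
Proof. by rewrite sqr_sqrtr // S_ge0. Qed.

Lemma l2norm_ge0 v : 0 <= l2norm v.
Proof. exact: sqrtr_ge0. Qed.

Lemma esumZ (I : set H) (c : R) (f : H -> \bar R) : 0 <= c ->
  (forall x, 0 <= f x)%E ->
  (\esum_(i in I) (c%:E * f i) = c%:E * \esum_(i in I) f i)%E.
Proof.
move=> c0 f0; rewrite /esum -ereal_supZl //; last first.
  by apply/set0P; exists (\sum_(x \in set0) f x)%E; exists set0 => //; exact: fsets_set0.
congr ereal_sup; apply/seteqP; split.
- move=> _ [X hX <-]; exists (\sum_(x \in X) f x)%E; first by exists X.
  by rewrite ge0_mule_fsumr.
- by move=> _ [_ [X hX <-] <-]; exists X => //; rewrite ge0_mule_fsumr.
Qed.

Fixpoint good (ps : seq (R * (H -> R))) : Prop :=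
  if ps is p :: ps' then 0 <= p.1 /\ inl2 p.2 /\ good ps' else True.

Lemma sum_esum ps : good ps ->
  (\esum_(x in [set: H]) (\sum_(p <- ps) p.1 * p.2 x ^+ 2)%:E =
   (\sum_(p <- ps) p.1 * S p.2)%:E)%E.
Proof.
elim: ps => [|p ps IH] /=.
  by move=> _; rewrite big_nil esum1 // => x _; rewrite big_nil.
move=> [p0 [pl gp]]; rewrite big_cons.
under eq_esum do rewrite big_cons EFinD.
rewrite esumD; last 2 first.
- by move=> x _; rewrite lee_fin mulr_ge0 // sqr_ge0.
- move=> x _; rewrite lee_fin; elim: (ps) gp => [|q qs IHq] /=; first by rewrite big_nil.
  by move=> [q0 [_ gq]]; rewrite big_cons addr_ge0 ?IHq // mulr_ge0 // sqr_ge0.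
rewrite IH // EFinD; congr (_ + _)%E.
under eq_esum do rewrite EFinM.
rewrite esumZ //; last by move=> x; rewrite lee_fin sqr_ge0.
by rewrite -[X in (_ * X)%E]/(sqnorm p.2) sqnormE // EFinM.
Qed.

Lemma Slin ps qs : good ps -> good qs ->
  (forall x, \sum_(p <- ps) p.1 * p.2 x ^+ 2 = \sum_(p <- qs) p.1 * p.2 x ^+ 2) ->
  \sum_(p <- ps) p.1 * S p.2 = \sum_(p <- qs) p.1 * S p.2.
Proof.
move=> gp gq e; apply: EFin_inj; rewrite -sum_esum // -sum_esum //.
by apply: eq_esum => x _; rewrite e.
Qed.

End L2facts.

Section L2b.
Variables (R : realType) (H : choiceType).
Implicit Types (v w : H -> R).

Lemma inl2_dom v g : inl2 v -> (forall x, g x ^+ 2 <= v x ^+ 2) ->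
  inl2 g /\ S g <= S v.
Proof.
move=> hv hg.
have le : (sqnorm g <= sqnorm v)%E by apply: le_esum => x _; rewrite lee_fin.
have hg2 : inl2 g by rewrite /inl2 (le_lt_trans le).
split => //; rewrite -lee_fin -!sqnormE //.
Qed.

Lemma inl2_lin a b v w : inl2 v -> inl2 w -> inl2 (fun x => a * v x + b * w x).
Proof.
move=> hv hw.
have g : good [:: (2 * a ^+ 2, v); (2 * b ^+ 2, w)].
  by repeat split => //; rewrite mulr_ge0 ?sqr_ge0.
rewrite /inl2 (@le_lt_trans _ _ (\esum_(x in [set: H])
   (\sum_(p <- [:: (2 * a ^+ 2, v); (2 * b ^+ 2, w)]) p.1 * p.2 x ^+ 2)%:E)) //.
  apply: le_esum => x _; rewrite lee_fin !big_cons big_nil /=.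
  have := sqr_ge0 (a * v x - b * w x); nra.
by rewrite sum_esum // ltry.
Qed.

Lemma inl2_0 : inl2 (fun _ : H => 0 : R).
Proof. by rewrite /inl2 /sqnorm esum1 // => x _; rewrite expr0n. Qed.

Lemma S_point v x : inl2 v -> v x ^+ 2 <= S v.
Proof.
move=> hv; rewrite -lee_fin -sqnormE //; apply: esum_ge; exists [set x].
  by split => //; exact: finite_set1.
by rewrite fsbig_set1.
Qed.

Lemma S0 v : inl2 v -> S v = 0 -> forall x, v x = 0.
Proof.
move=> hv h x; have := S_point x hv; rewrite h => /eqP.
by move: (sqr_ge0 (v x)) => ? ?; apply/eqP; rewrite -sqrf_eq0 eq_le sqr_ge0 andbT; 
   apply: (le_trans (S_point x hv)); rewrite h.
Qed.

Notation B := (@l2inner R H).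

Lemma BE v w : B v w = (S (fun x => v x + w x) - S (fun x => v x - w x)) / 4.
Proof. by rewrite /l2inner !l2normE. Qed.

Lemma Bvv v : inl2 v -> B v v = S v.
Proof.
move=> hv; rewrite BE.
have h1 : inl2 (fun x => v x + v x).
  by have := inl2_lin 1 1 hv hv; under eq_fun do rewrite !mul1r.
have h2 : inl2 (fun x => v x - v x).
  by have := inl2_lin 1 (-1) hv hv; under eq_fun do rewrite mul1r mulN1r.
have := @Slin R H [:: (1, fun x => v x + v x)] [:: (4, v); (1, fun x => v x - v x)]
  (conj ler01 (conj h1 I)) (conj (ler0n _ 4) (conj hv (conj ler01 (conj h2 I))))
  ltac:(move=> x; rewrite !big_cons !big_nil /=; ring).
rewrite !big_cons !big_nil /=; lra.
Qed.

End L2b.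

Section L2c.
Variables (R : realType) (H : choiceType).
Implicit Types (v w : H -> R).
Notation B := (@l2inner R H).

Lemma inl2D v w : inl2 v -> inl2 w -> inl2 (fun x => v x + w x).
Proof. by move=> hv hw; have := inl2_lin 1 1 hv hw; under eq_fun do rewrite !mul1r. Qed.

Lemma inl2B v w : inl2 v -> inl2 w -> inl2 (fun x => v x - w x).
Proof. by move=> hv hw; have := inl2_lin 1 (-1) hv hw; under eq_fun do rewrite mul1r mulN1r. Qed.

Lemma inl2Z a v : inl2 v -> inl2 (fun x => a * v x).
Proof.
move=> hv; have := inl2_lin a 0 hv hv; under eq_fun do rewrite mul0r addr0. by [].
Qed.

Lemma inl2N v : inl2 v -> inl2 (fun x => - v x).
Proof. by move=> hv; have := inl2Z (-1) hv; under eq_fun do rewrite mulN1r. Qed.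

Lemma S_eq v w : inl2 v -> inl2 w -> (forall x, v x ^+ 2 = w x ^+ 2) -> S v = S w.
Proof.
move=> hv hw e.
have := @Slin R H [:: (1, v)] [:: (1, w)] (conj ler01 (conj hv I)) (conj ler01 (conj hw I))
  ltac:(move=> x; rewrite !big_cons !big_nil /= e //).
rewrite !big_cons !big_nil /=; lra.
Qed.

Lemma Bsym v w : inl2 v -> inl2 w -> B v w = B w v.
Proof.
move=> hv hw; rewrite !BE; congr ((_ - _) / 4).
  by congr S; apply/funext => x; rewrite addrC.
by apply: S_eq; [exact: inl2B|exact: inl2B|move=> x; ring].
Qed.

Lemma Bneg v w : inl2 v -> inl2 w -> B (fun x => - v x) w = - B v w.
Proof.
move=> hv hw; rewrite !BE.
rewrite (@S_eq (fun x => - v x + w x) (fun x => v x - w x)); last 3 first.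
- by apply: inl2D => //; exact: inl2N.
- exact: inl2B.
- by move=> x; ring.
rewrite (@S_eq (fun x => - v x - w x) (fun x => v x + w x)); last 3 first.
- by apply: inl2B => //; exact: inl2N.
- exact: inl2D.
- by move=> x; ring.
by field.
Qed.

Lemma Blin_pos a b v1 v2 w : 0 <= a -> 0 <= b -> inl2 v1 -> inl2 v2 -> inl2 w ->
  B (fun x => a * v1 x + b * v2 x) w = a * B v1 w + b * B v2 w.
Proof.
move=> a0 b0 h1 h2 hw; rewrite !BE.
have hP := inl2_lin a b h1 h2.
have := @Slin R H
  [:: (1, fun x => (a * v1 x + b * v2 x) + w x); (a, fun x => v1 x - w x); (b, fun x => v2 x - w x)]
  [:: (1, fun x => (a * v1 x + b * v2 x) - w x); (a, fun x => v1 x + w x); (b, fun x => v2 x + w x)].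
move=> /(_ _ _ _) e.
have := e (conj ler01 (conj (inl2D hP hw) (conj a0 (conj (inl2B h1 hw) (conj b0 (conj (inl2B h2 hw) I))))))
          (conj ler01 (conj (inl2B hP hw) (conj a0 (conj (inl2D h1 hw) (conj b0 (conj (inl2D h2 hw) I))))))
  ltac:(move=> x; rewrite !big_cons !big_nil /=; ring).
rewrite !big_cons !big_nil /= => {}e.
lra.
Qed.

Lemma Blin a b v1 v2 w : inl2 v1 -> inl2 v2 -> inl2 w ->
  B (fun x => a * v1 x + b * v2 x) w = a * B v1 w + b * B v2 w.
Proof.
move=> h1 h2 hw.
have [a0|a0] := leP 0 a; have [b0|b0] := leP 0 b.
- exact: Blin_pos.
- have := @Blin_pos a (- b) v1 (fun x => - v2 x) w a0 ltac:(lra) h1 (inl2N h2) hw.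
  rewrite Bneg //. under eq_fun do rewrite mulrNN. move=> ->; ring.
- have := @Blin_pos (- a) b (fun x => - v1 x) v2 w ltac:(lra) b0 (inl2N h1) h2 hw.
  rewrite Bneg //. under eq_fun do rewrite mulrNN. move=> ->; ring.
- have := @Blin_pos (- a) (- b) (fun x => - v1 x) (fun x => - v2 x) w ltac:(lra) ltac:(lra)
    (inl2N h1) (inl2N h2) hw.
  rewrite !Bneg //. under eq_fun do rewrite !mulrNN. move=> ->; ring.
Qed.

Lemma Blin_r a b v w1 w2 : inl2 v -> inl2 w1 -> inl2 w2 ->
  B v (fun x => a * w1 x + b * w2 x) = a * B v w1 + b * B v w2.
Proof.
move=> hv h1 h2; rewrite Bsym //; last exact: inl2_lin.
by rewrite Blin // (Bsym h1) // (Bsym h2).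
Qed.

Lemma Bortho v w : inl2 v -> inl2 w -> (forall x, v x * w x = 0) -> B v w = 0.
Proof.
move=> hv hw e; rewrite BE (@S_eq (fun x => v x + w x) (fun x => v x - w x)).
- by rewrite subrr mul0r.
- exact: inl2D.
- exact: inl2B.
- by move=> x; have := e x; nra.
Qed.

Lemma B0r v : B v (fun _ => 0) = 0.
Proof.
by rewrite BE; under eq_fun do rewrite addr0; under [X in _ - S X]eq_fun do rewrite subr0;
  rewrite subrr mul0r.
Qed.

End L2c.

Section CS.
Variables (R : realType) (H : choiceType) (Q : (H -> R) -> (H -> R) -> R).
Hypothesis Qlin : forall a b v1 v2 w, inl2 v1 -> inl2 v2 -> inl2 w ->
  Q (fun x => a * v1 x + b * v2 x) w = a * Q v1 w + b * Q v2 w.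
Hypothesis Qsym : forall v w, inl2 v -> inl2 w -> Q v w = Q w v.
Hypothesis Qpos : forall v, inl2 v -> 0 <= Q v v.
Hypothesis Qdeg : forall v w, inl2 v -> inl2 w -> Q v v = 0 -> Q w v = 0.

Lemma CS v w : inl2 v -> inl2 w -> Q v w ^+ 2 <= Q v v * Q w w.
Proof.
move=> hv hw.
have [a0|a0] := eqVneq (Q w w) 0.
  by rewrite (Qdeg hw hv a0) a0 expr0n mulr0.
have apos : 0 < Q w w by rewrite lt0r a0 Qpos.
set a := Q w w; set b := Q v w.
have hz := inl2_lin a (- b) hv hw.
have := Qpos hz; rewrite Qlin // (Qsym hv hz) (Qsym hw hz) !Qlin //.
rewrite -/a -/b (Qsym hw hv) -/b => h.
have : 0 <= a * (a * Q v v - b ^+ 2) by rewrite expr2; nra.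
rewrite pmulr_rge0 // subr_ge0 => h2; nra.
Qed.
End CS.

Section Op.
Variables (R : realType) (H : choiceType).
Implicit Types (v w : H -> R).

Lemma S_fun0 : S (fun _ : H => 0 : R) = 0.
Proof. by rewrite /S /sqnorm esum1 // => x _; rewrite expr0n. Qed.

Lemma l2norm0 : l2norm (fun _ : H => 0 : R) = 0.
Proof. by rewrite /l2norm -/(S _) S_fun0 sqrtr0. Qed.

Lemma SZ a v : inl2 v -> S (fun x => a * v x) = a ^+ 2 * S v.
Proof.
move=> hv.
have := @Slin R H [:: (1, fun x => a * v x)] [:: (a ^+ 2, v)]
  (conj ler01 (conj (inl2Z a hv) I)) (conj (sqr_ge0 a) (conj hv I))
  ltac:(move=> x; rewrite !big_cons !big_nil /=; ring).
rewrite !big_cons !big_nil /=; lra.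
Qed.

Lemma l2normZ a v : inl2 v -> l2norm (fun x => a * v x) = `|a| * l2norm v.
Proof.
move=> hv; rewrite /l2norm -!/(S _) SZ // sqrtrM ?sqr_ge0 //.
by rewrite sqrtr_sqr.
Qed.

Lemma S0fun v : inl2 v -> S v = 0 -> v = (fun _ => 0).
Proof. by move=> hv h; apply/funext => x; exact: S0 hv h x. Qed.

Variable T : (H -> R) -> (H -> R).
Hypothesis Tl2 : forall v, inl2 v -> inl2 (T v).
Hypothesis TZ : forall a v, inl2 v -> T (fun x => a * v x) = (fun x => a * T v x).
Hypothesis Tb : exists M : R, forall v, inl2 v -> l2norm (T v) <= M * l2norm v.

Lemma T0 : T (fun _ => 0) = (fun _ => 0).
Proof.
have := TZ 0 (@inl2_0 R H); under eq_fun do rewrite mul0r.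
by move=> ->; apply/funext => x; rewrite mul0r.
Qed.

Let E := [set l2norm (T v) | v in [set v | inl2 v /\ l2norm v <= 1]].

Lemma E_ub : has_ubound E.
Proof.
case: Tb => M hM; exists `|M| => _ [v [hv hn] <-].
have := hM v hv; have := l2norm_ge0 v; have := ler_norm M; have := normr_ge0 M; nra.
Qed.

Lemma opnorm_ge0 : 0 <= opnorm T.
Proof.
apply: (le_trans (l2norm_ge0 (T (fun _ => 0)))).
apply: (ub_le_sup E_ub); exists (fun _ => 0) => //.
by split; [exact: inl2_0|rewrite l2norm0].
Qed.

Lemma opnorm_le v : inl2 v -> l2norm (T v) <= opnorm T * l2norm v.
Proof.
move=> hv; have [n0|n0] := eqVneq (l2norm v) 0.
  have hS : S v = 0 by rewrite -l2normE n0 expr0n.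
  by rewrite n0 mulr0 (S0fun hv hS) T0 l2norm0.
have npos : 0 < l2norm v by rewrite lt0r n0 l2norm_ge0.
have hv' := inl2Z (l2norm v)^-1 hv.
have h1 : l2norm (fun x => (l2norm v)^-1 * v x) = 1.
  by rewrite l2normZ // ger0_norm ?invr_ge0 ?l2norm_ge0 // mulVf.
have : l2norm (T (fun x => (l2norm v)^-1 * v x)) <= opnorm T.
  by apply: (ub_le_sup E_ub); exists (fun x => (l2norm v)^-1 * v x) => //; split => //; rewrite h1.
rewrite TZ // l2normZ; last exact: Tl2.
rewrite ger0_norm ?invr_ge0 ?l2norm_ge0 //.
move=> h; rewrite -ler_pdivrMr // mulrC; exact: h.
Qed.

End Op.

Section Bulk.
Variables (R : realType) (H : choiceType).
Implicit Types (v w : H -> R).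
Notation B := (@l2inner R H).
Notation N := (@l2norm R H).
Variables (A Ainv : (H -> R) -> (H -> R)).
Hypothesis Al2 : forall v, inl2 v -> inl2 (A v).
Hypothesis Alin : forall (a : R) v1 v2, inl2 v1 -> inl2 v2 ->
     A (fun x => a * v1 x + v2 x) = (fun x => a * A v1 x + A v2 x).
Hypothesis Ab : exists M : R, forall v, inl2 v -> l2norm (A v) <= M * l2norm v.
Hypothesis Asym : forall v1 v2, inl2 v1 -> inl2 v2 -> l2inner (A v1) v2 = l2inner v1 (A v2).
Hypothesis Apos : forall v, inl2 v -> v <> (fun _ => 0) -> 0 < l2inner (A v) v.
Hypothesis Ail2 : forall v, inl2 v -> inl2 (Ainv v).
Hypothesis AAi : forall v, inl2 v -> A (Ainv v) = v.
Hypothesis AiA : forall v, inl2 v -> Ainv (A v) = v.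
Hypothesis Aib : exists M : R, forall v, inl2 v -> l2norm (Ainv v) <= M * l2norm v.

Lemma A0 : A (fun _ => 0) = (fun _ => 0).
Proof.
have := Alin 1 (@inl2_0 R H) (@inl2_0 R H).
have -> : (fun _ : H => 1 * 0 + 0 : R) = (fun _ => 0) by apply/funext => x; rewrite mulr0 addr0.
move=> e; apply/funext => x; have := congr1 (fun g => g x) e => /= h.
by move: h; rewrite mul1r; lra.
Qed.

Lemma AZ a v : inl2 v -> A (fun x => a * v x) = (fun x => a * A v x).
Proof.
move=> hv; have := Alin a hv (@inl2_0 R H); rewrite A0.
have -> : (fun x => a * v x + 0) = (fun x => a * v x) by apply/funext => x; rewrite addr0.
by move=> ->; apply/funext => x; rewrite addr0.
Qed.

Lemma Alin2 a b v1 v2 : inl2 v1 -> inl2 v2 ->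
  A (fun x => a * v1 x + b * v2 x) = (fun x => a * A v1 x + b * A v2 x).
Proof. by move=> h1 h2; rewrite (Alin a h1 (inl2Z b h2)) AZ. Qed.

Lemma AiZ a v : inl2 v -> Ainv (fun x => a * v x) = (fun x => a * Ainv v x).
Proof.
move=> hv; have e : (fun x => a * v x) = A (fun x => a * Ainv v x).
  by rewrite AZ ?AAi //; exact: Ail2.
by rewrite e AiA //; apply/inl2Z/Ail2.
Qed.

Definition Q v w := B (A v) w.

Lemma Qlin a b v1 v2 w : inl2 v1 -> inl2 v2 -> inl2 w ->
  Q (fun x => a * v1 x + b * v2 x) w = a * Q v1 w + b * Q v2 w.
Proof. by move=> h1 h2 hw; rewrite /Q Alin2 // Blin //; apply: Al2. Qed.

Lemma Qsym v w : inl2 v -> inl2 w -> Q v w = Q w v.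
Proof. by move=> hv hw; rewrite /Q Asym // Bsym //; apply: Al2. Qed.

Lemma Qpos v : inl2 v -> 0 <= Q v v.
Proof.
move=> hv; have [->|nz] := pselect (v = fun _ => 0).
  by rewrite /Q A0 B0r.
exact/ltW/Apos.
Qed.

Lemma Qdeg v w : inl2 v -> inl2 w -> Q v v = 0 -> Q w v = 0.
Proof.
move=> hv hw h0; have [->|nz] := pselect (v = fun _ => 0); first by rewrite /Q B0r.
by have := Apos hv nz; rewrite -/(Q v v) h0 ltxx.
Qed.

Lemma CSQ v w : inl2 v -> inl2 w -> Q v w ^+ 2 <= Q v v * Q w w.
Proof. exact: (CS Qlin Qsym Qpos Qdeg). Qed.

Lemma CSB v w : inl2 v -> inl2 w -> B v w <= N v * N w.
Proof.
move=> hv hw.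
have Blin' := @Blin R H; have Bsym' := @Bsym R H.
have Bpos : forall v, inl2 v -> 0 <= B v v by move=> u hu; rewrite Bvv // S_ge0.
have Bdeg : forall v w, inl2 v -> inl2 w -> B v v = 0 -> B w v = 0.
  move=> u z hu hz; rewrite Bvv // => /(S0fun hu) ->; exact: B0r.
have := CS Blin' Bsym' Bpos Bdeg hv hw; rewrite !Bvv // -!l2normE -exprMn.
have : 0 <= N v * N w by rewrite mulr_ge0 ?l2norm_ge0.
move: (N v * N w) => q q0 h; nra.
Qed.

Lemma bulk (e y : H -> R) (P : H -> bool) (alpha lam : R) :
  inl2 e -> inl2 y -> (forall x, ~~ P x -> y x = 0) ->
  opnorm A * S (fun x => e x - y x) <= lam ^+ 2 * S (A e) ->
  0 < alpha -> alpha < (Num.sqrt (opnorm A * opnorm Ainv))^-1 ->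
  alpha <= (Num.sqrt (opnorm A * opnorm Ainv))^-1 * Num.sqrt (1 - opnorm A * lam ^+ 2) ->
  alpha * N (A e) <= N (fun x => if P x then A e x else 0).
Proof.
move=> he hy hP hz al0 al1 al2.
set a := opnorm A; set c := opnorm Ainv; set r := A e.
have hr : inl2 r by exact: Al2.
have a0 : 0 <= a by exact: (@opnorm_ge0 R H A Ab).
have c0 : 0 <= c by exact: (@opnorm_ge0 R H Ainv Aib).
have kpos : 0 < a * c.
  rewrite lt_neqAle mulr_ge0 // andbT; apply/eqP => k0.
  by move: al1; rewrite -k0 sqrtr0 invr0 => /(lt_trans al0); rewrite ltxx.
set Pr := fun x => if P x then r x else 0.
have hPr : inl2 Pr.
  by case: (inl2_dom hr (v := r) (g := Pr)) => // x; rewrite /Pr; case: (P x); rewrite ?expr0n ?sqr_ge0.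
set eps := N r; set p := N Pr.
have eps0 : 0 <= eps by exact: l2norm_ge0.
have p0 : 0 <= p by exact: l2norm_ge0.
have [e0|epos] := eqVneq eps 0; first by rewrite e0 mulr0.
have {epos}epos : 0 < eps by rewrite lt0r epos.
have h1 : eps ^+ 2 <= a * Q e e.
  have := CSQ he hr; rewrite {1}/Q -/r Bvv // -l2normE -/eps.
  have : Q r r <= a * eps ^+ 2.
    rewrite /Q (le_trans (CSB (Al2 hr) hr)) // expr2 mulrA; apply: ler_wpM2r => //.
    exact: (@opnorm_le R H A Al2 AZ Ab r hr).
  move=> hQr hcs; have hQe := Qpos he.
  have e2 : 0 < eps ^+ 2 by rewrite exprn_gt0.
  rewrite -(ler_pM2l e2) -expr2; apply: (le_trans hcs).
  rewrite [X in _ <= X](_ : _ = Q e e * (a * eps ^+ 2)); last by ring.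
  exact: ler_wpM2l.
set z := fun x => 1 * e x + (-1) * y x.
have hzl : inl2 z by exact: inl2_lin.
have h3 : Q z z <= lam ^+ 2 * eps ^+ 2.
  have -> : z = (fun x => e x - y x) by apply/funext => x; rewrite /z mul1r mulN1r.
  rewrite /eps l2normE; apply: le_trans hz; rewrite /Q.
  apply: (le_trans (CSB (Al2 (inl2B he hy)) (inl2B he hy))).
  rewrite -l2normE expr2 mulrA; apply: ler_wpM2r; first exact: l2norm_ge0.
  exact: (@opnorm_le R H A Al2 AZ Ab _ (inl2B he hy)).
have h2 : Q z z = Q e e - 2 * Q e y + Q y y.
  rewrite Qlin // (Qsym he hzl) (Qsym hy hzl) !Qlin // (Qsym hy he); ring.
have h4 : Q e y <= p * N y.
  have -> : Q e y = B Pr y.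
    rewrite /Q -/r.
    have -> : r = (fun x => 1 * Pr x + 1 * (r x - Pr x)).
      by apply/funext => x; rewrite !mul1r addrC subrK.
    rewrite Blin //; last exact: inl2B.
    rewrite (@Bortho R H (fun x => r x - Pr x) y) ?mulr0 ?addr0 ?mul1r //; first exact: inl2B.
    by move=> x; rewrite /Pr; case: ifPn => [_|/hP ->]; rewrite ?subrr ?mul0r ?mulr0.
  exact: CSB.
have h5 : N y ^+ 2 <= c * Q y y.
  set t := Ainv y.
  have ht : inl2 t by exact: Ail2.
  have := CSQ ht hy; rewrite {1}/Q AAi // Bvv // -l2normE.
  have : Q t t <= c * N y ^+ 2.
    rewrite /Q AAi // (le_trans (CSB hy ht)) // expr2 [c * _]mulrC -mulrA; apply: ler_wpM2l; first exact: l2norm_ge0.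
    by rewrite mulrC; exact: (@opnorm_le R H Ainv Ail2 AiZ Aib y hy).
  have := Qpos hy; have := Qpos ht; have := l2norm_ge0 y.
  move=> ny0 Qt0 Qy0 hQt hmain.
  have [y0|ypos] := eqVneq (N y) 0; first by rewrite y0 expr0n mulr_ge0.
  have ypos' : 0 < N y ^+ 2 by rewrite exprn_gt0 // lt0r ypos.
  have : N y ^+ 2 * N y ^+ 2 <= N y ^+ 2 * (c * Q y y).
    rewrite -expr2; apply: (le_trans hmain).
    by rewrite mulrA [_ * c]mulrC; apply: ler_wpM2r.
  by rewrite ler_pM2l.
have cpos : 0 < c.
  by rewrite lt_neqAle c0 andbT; apply/eqP => c0'; move: kpos; rewrite -c0' mulr0 ltxx.
have h6 : 2 * Q e y - Q y y <= c * p ^+ 2.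
  have ny0 := l2norm_ge0 y.
  have : c * (2 * Q e y - Q y y) <= c * (c * p ^+ 2).
    have := sqr_ge0 (p * c - N y); nra.
  by rewrite ler_pM2l.
have h7 : eps ^+ 2 <= a * lam ^+ 2 * eps ^+ 2 + a * c * p ^+ 2.
  apply: (le_trans h1); rewrite -mulrA -mulrA -mulrDr ler_wpM2l //; lra.
set k := a * c.
have d0 : 0 < 1 - a * lam ^+ 2.
  rewrite ltNge; apply/negP => hd; move: al2; rewrite (ler0_sqrtr hd) mulr0 => /(lt_le_trans al0).
  by rewrite ltxx.
have h8 : alpha ^+ 2 * k <= 1 - a * lam ^+ 2.
  have : alpha ^+ 2 <= ((Num.sqrt k)^-1) ^+ 2 * (1 - a * lam ^+ 2).
    rewrite -(sqr_sqrtr (ltW d0)) -exprMn; apply: lerXn2r => //; rewrite ?nnegrE ?ltW //.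
    exact: (lt_le_trans al0 al2).
  rewrite exprVn sqr_sqrtr; last exact: ltW.
  move=> h.
  by rewrite -ler_pdivlMr // mulrC.
have h9 : (alpha * eps) ^+ 2 <= p ^+ 2.
  rewrite -(ler_pM2l kpos) exprMn.
  have : (alpha ^+ 2 * k) * eps ^+ 2 <= (1 - a * lam ^+ 2) * eps ^+ 2 by rewrite ler_wpM2r ?sqr_ge0.
  rewrite /k in h7 *; nra.
by rewrite -(ler_pXn2r (n := 2)) // ?nnegrE // mulr_ge0 // ltW.
Qed.

End Bulk.

Import archimedean.Num.Theory.

Section Approx.
Variables (R : realType) (H : countType).
Implicit Types (v w : H -> R).

Lemma inl2_fin v (sq : seq H) : (forall x, v x != 0 -> x \in sq) -> inl2 v.
Proof.
move=> hs; rewrite /inl2 /sqnorm.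
rewrite (@eq_esum _ _ _ _ (fun x => if x \in [set` sq] then (v x ^+ 2)%:E else 0%E)); last first.
  move=> x _; case: ifPn => // /negP hx; have : v x = 0.
    by have [//|/hs h] := eqVneq (v x) 0; exfalso; apply: hx; rewrite in_setE.
  by move=> ->; rewrite expr0n.
rewrite -esum_mkcond esum_fset; last 2 first.
- exact: finite_seq.
- by move=> x _; rewrite lee_fin sqr_ge0.
by rewrite fsbig_finite ?finite_seq //= sumEFin ltry.
Qed.

Lemma bn_ge0 v N : 0 <= best_nterm v N.
Proof.
apply: lb_le_inf.
  exists (l2norm (fun x => v x - 0)); exists (fun _ => 0) => //.
  by exists [::]; split => // x; rewrite eqxx.
by move=> _ [w _ <-]; exact: l2norm_ge0.
Qed.

Lemma approx (s : R) v (delta : R) : 0 < s -> 0 < delta -> inAs s v ->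
  exists sq : seq H, (size sq)%:R <= (fine (as_norm s v) / delta) `^ s^-1 /\
     S (fun x => if x \in sq then 0 else v x) < delta ^+ 2.
Proof.
move=> s0 d0 [hv hA].
have Ege : forall N, (((N.+1%:R `^ s) * best_nterm v N)%:E <= as_norm s v)%E.
  by move=> N; apply: ereal_sup_ubound; exists N.
have A0 : (0 <= as_norm s v)%E.
  by apply: le_trans (Ege 0%N); rewrite lee_fin mulr_ge0 ?powR_ge0 ?bn_ge0.
set K := fine (as_norm s v).
have AK : as_norm s v = K%:E by rewrite /K fineK // ge0_fin_numE.
have K0 : 0 <= K by rewrite /K fine_ge0.
set x0 := (K / delta) `^ s^-1.
have x00 : 0 <= x0 by exact: powR_ge0.
set N := Num.truncn x0.
have [hN1 hN2] : (N%:R <= x0) /\ (x0 < N.+1%:R).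
  by have /andP[] := archimedean.Num.Theory.truncn_itv x00.
have Kd : K / delta < N.+1%:R `^ s.
  have -> : K / delta = x0 `^ s.
    rewrite /x0 -powRrM mulVf ?gt_eqF ?invr_gt0 // powRr1 // divr_ge0 //; exact: ltW.
  move: (@gt0_ltr_powR R s s0 x0 N.+1%:R); rewrite !nnegrE => h; apply: h => //; exact: ler0n.
have pN : 0 < N.+1%:R `^ s by apply: powR_gt0; rewrite ltr0n.
have bnd : best_nterm v N < delta.
  have := Ege N; rewrite AK lee_fin => h.
  have : N.+1%:R `^ s * best_nterm v N < N.+1%:R `^ s * delta.
    apply: (le_lt_trans h); rewrite -ltr_pdivrMr // mulrC //.
  by rewrite ltr_pM2l.
have ne : [set l2norm (fun x => v x - w x) | w in [set w | supp_le w N]] !=set0.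
  exists (l2norm (fun x => v x - 0)); exists (fun _ => 0) => //.
  by exists [::]; split => // x; rewrite eqxx.
have := inf_lt ne; rewrite /best_nterm in bnd; move=> /(_ _ bnd) [y [w hsupp hy] hlt]; subst y.
case: hsupp => sq [hsz hsq].
exists sq; split.
  by apply: le_trans hN1; rewrite ler_nat.
have hw : inl2 w by exact: inl2_fin hsq.
have hvw : inl2 (fun x => v x - w x) by exact: inl2B.
have dom : forall x, (if x \in sq then 0 else v x) ^+ 2 <= (v x - w x) ^+ 2.
  move=> x; case: ifPn => hx; first by rewrite expr0n sqr_ge0.
  have -> : w x = 0 by have [//|/hsq h] := eqVneq (w x) 0; rewrite h in hx.
  by rewrite subr0.
have [_ le] := @inl2_dom R H (fun x => v x - w x) (fun x => if x \in sq then 0 else v x) hvw dom.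
apply: (le_lt_trans le); rewrite -l2normE.
by rewrite ltr_pXn2r // ?nnegrE ?l2norm_ge0 // ltW.
Qed.

End Approx.

Section Decomp.
Variables (R : realType) (G0 : countType) (J : nat).
Notation G := (Gidx G0 J).
Implicit Types (u : G -> R).

Lemma sqrt_fineK (E : \bar R) : (0 <= E)%E -> (E < +oo)%E ->
  ((Num.sqrt (fine E)) ^+ 2)%:E = E.
Proof. by move=> h0 h1; rewrite sqr_sqrtr ?fine_ge0 // fineK // ge0_fin_numE. Qed.

Lemma esum_sub (T : choiceType) (A : set T) (f : T -> \bar R) : (forall x, 0 <= f x)%E ->
  (\esum_(x in A) f x <= \esum_(x in [set: T]) f x)%E.
Proof.
move=> f0; rewrite esum_mkcond; apply: le_esum => x _; case: ifPn => // _.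
Qed.

Lemma pi0E u g : inl2 u ->
  ((pi0 u g) ^+ 2)%:E = \esum_(t in [set: J.-tuple nat]) ((u (g, t)) ^+ 2)%:E.
Proof.
move=> hu; rewrite /pi0 sqrt_fineK //.
  by apply: esum_ge0 => t _; rewrite lee_fin sqr_ge0.
apply: le_lt_trans hu; rewrite /sqnorm.
have -> : \esum_(x in [set: G]) ((u x) ^+ 2)%:E =
   \esum_(i in [set: G0]) \esum_(t in [set: J.-tuple nat]) ((u (i, t)) ^+ 2)%:E.
  rewrite esum_esum; last by move=> *; rewrite lee_fin sqr_ge0.
  have -> : [set: G0] `*`` (fun _ => [set: J.-tuple nat]) = [set: G].
    by apply/seteqP; split => // -[a b].
  by apply: eq_esum => -[a b].
apply: esum_ge; exists [set g]; first by split => //; exact: finite_set1.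
by rewrite fsbig_set1.
Qed.

Lemma pijE u k n : inl2 u ->
  ((pij k u n) ^+ 2)%:E = \esum_(x in [set x : G | tnth x.2 k = n]) ((u x) ^+ 2)%:E.
Proof.
move=> hu; rewrite /pij sqrt_fineK //.
  by apply: esum_ge0 => t _; rewrite lee_fin sqr_ge0.
by apply: le_lt_trans hu; apply: esum_sub => x; rewrite lee_fin sqr_ge0.
Qed.

Lemma decomp0 u (M0 : seq G0) : inl2 u ->
  \esum_(x in [set: G]) ((if x.1 \in M0 then 0 else u x ^+ 2)%:E) =
  sqnorm (fun g => if g \in M0 then 0 else pi0 u g).
Proof.
move=> hu; rewrite /sqnorm.
transitivity (\esum_(i in [set: G0]) \esum_(t in [set: J.-tuple nat])
    ((if i \in M0 then 0 else u (i, t) ^+ 2)%:E)).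
  rewrite esum_esum; last by move=> i j _ _; case: ifPn; rewrite // lee_fin sqr_ge0.
  have -> : [set: G0] `*`` (fun _ => [set: J.-tuple nat]) = [set: G].
    by apply/seteqP; split => // -[a b].
  by apply: eq_esum => -[a b].
apply: eq_esum => g _; case: ifPn => hg.
  by rewrite expr0n esum1.
by rewrite pi0E.
Qed.

Lemma decompk u (M : 'I_J -> seq nat) k : inl2 u ->
  \esum_(x in [set: G]) ((if tnth x.2 k \in M k then 0 else u x ^+ 2)%:E) =
  sqnorm (fun n => if n \in M k then 0 else pij k u n).
Proof.
move=> hu; rewrite /sqnorm.
have -> : [set: G] = \bigcup_(n in [set: nat]) [set x : G | tnth x.2 k = n].
  by apply/seteqP; split => // x _; exists (tnth x.2 k).
rewrite esum_bigcupT; last first.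
- by move=> x; case: ifPn; rewrite // lee_fin sqr_ge0.
- by move=> i j _ _ [x [/= -> ->]].
apply: eq_esum => n _; case: ifPn => hn.
  rewrite expr0n esum1 // => x /= e; rewrite e hn //.
rewrite pijE //; apply: eq_esum => x /= e; rewrite e (negPf hn) //.
Qed.

Lemma decomp u (M0 : seq G0) (M : 'I_J -> seq nat) : inl2 u ->
  (sqnorm (fun x => (u x - restr M0 M u x)%R) <=
   sqnorm (fun g => if g \in M0 then 0%R else pi0 u g) +
   \sum_(k < J) sqnorm (fun n => if n \in M k then 0%R else pij k u n))%E.
Proof.
move=> hu.
rewrite -decomp0 //.
under eq_bigr do rewrite -decompk //.
rewrite -esum_sum; last by move=> x k _ _; case: ifPn; rewrite // lee_fin sqr_ge0.
rewrite -esumD; last 2 first.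
- by move=> x _; case: ifPn; rewrite // lee_fin sqr_ge0.
- by move=> x _; apply: sume_ge0 => k _; case: ifPn; rewrite // lee_fin sqr_ge0.
apply: le_esum => x _.
rewrite /restr; case: ifPn => hin.
  rewrite subrr expr0n adde_ge0 //; first by case: ifPn; rewrite // lee_fin sqr_ge0.
  by apply: sume_ge0 => k _; case: ifPn; rewrite // lee_fin sqr_ge0.
rewrite subr0; move: hin; rewrite /in_prod negb_and => /orP[h1|].
  rewrite (negPf h1) leeDl //.
  by apply: sume_ge0 => k _; case: ifPn; rewrite // lee_fin sqr_ge0.
rewrite negb_forall => /existsP [k hk].
rewrite (bigD1 k) //= (negPf hk) addeCA leeDl // adde_ge0 //.
  by case: ifPn; rewrite // lee_fin sqr_ge0.
by apply: sume_ge0 => j _; case: ifPn; rewrite // lee_fin sqr_ge0.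
Qed.

End Decomp.

Lemma inl2_finset (R : realType) (H : choiceType) (v : H -> R) (D : set H) :
  finite_set D -> (forall x, v x != 0 -> D x) -> inl2 v.
Proof.
move=> fD hs; rewrite /inl2 /sqnorm.
rewrite (@eq_esum _ _ _ _ (fun x => if x \in D then (v x ^+ 2)%:E else 0%E)); last first.
  move=> x _; case: ifPn => // /negP hx; have : v x = 0.
    by have [//|/hs h] := eqVneq (v x) 0; exfalso; apply: hx; rewrite in_setE.
  by move=> ->; rewrite expr0n.
rewrite -esum_mkcond esum_fset //; last by move=> x _; rewrite lee_fin sqr_ge0.
by rewrite fsbig_finite //= sumEFin ltry.
Qed.

Lemma finite_prod (G0 : countType) (J : nat) (L0 : seq G0) (L : 'I_J -> seq nat) :
  finite_set [set x : Gidx G0 J | in_prod L0 L x].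
Proof.
set m := \max_(k < J) \max_(n <- L k) n.
have hm : forall k n, n \in L k -> (n <= m)%N.
  move=> k n hn; apply: leq_trans (leq_bigmax_cond k isT).
  exact: (@leq_bigmax_seq _ (L k) xpredT (fun n => n) n hn).
pose g (f : {ffun 'I_J -> 'I_m.+1}) : J.-tuple nat := [tuple val (f k) | k < J].
apply: (@sub_finite_set _ _ ([set` L0] `*` (g @` [set: {ffun 'I_J -> 'I_m.+1}]))).
  move=> x /andP[h1 /forallP h2]; split => //=.
  exists [ffun k => inord (tnth x.2 k)] => //.
  apply: eq_from_tnth => k; rewrite tnth_mktuple ffunE; apply: inordK.
  by rewrite ltnS; apply: hm (h2 k).
apply: finite_setX; first exact: finite_seq.
by apply: finite_image; exact: finite_finset.
Qed.

Lemma card_diff_cat (T : eqType) (s t : seq T) : (card_diff (s ++ t) s <= size t)%N.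
Proof.
rewrite /card_diff (leq_trans (size_undup _)) // filter_cat.
have -> : [seq x <- s | x \notin s] = [::].
  by have := @eq_in_filter _ (fun x => x \notin s) pred0 s; rewrite filter_pred0 => -> // x ->.
by rewrite cat0s size_filter count_size.
Qed.

Lemma card_diff_self (T : eqType) (s : seq T) : card_diff s s = 0%N.
Proof.
rewrite /card_diff.
have -> : [seq x <- s | x \notin s] = [::].
  by have := @eq_in_filter _ (fun x => x \notin s) pred0 s; rewrite filter_pred0 => -> // x ->.
by [].
Qed.

Lemma powRV (R : realType) (x p : R) : 0 < x -> (x^-1) `^ p = x `^ (- p).
Proof.
move=> x0; rewrite powRN.
have : (x^-1) `^ p * x `^ p = 1.
  by rewrite -powRM ?invr_ge0 ?ltW // mulVf ?gt_eqF // powR1.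
have : 0 < x `^ p by exact: powR_gt0.
move=> h1 h2; by rewrite -[LHS]mulr1 -(mulfV (lt0r_neq0 h1)) mulrA h2 mul1r.
Qed.

Unset Implicit Arguments.

Theorem theorem4p5 (R : realType) (G0 : countType) (J : nat)
  (A Ainv : (Gidx G0 J -> R) -> (Gidx G0 J -> R)) (f u : Gidx G0 J -> R)
  (alpha lam s1 s2 : R)
  (L0 : seq G0) (L : 'I_J -> seq nat) (w : Gidx G0 J -> R)
  (Ls0 : seq G0) (Ls : 'I_J -> seq nat) :
  (1 <= J)%N ->
  (* A is a bounded, symmetric, positive definite operator on l2(G) *)
  (forall v, inl2 v -> inl2 (A v)) ->
  (forall (a : R) v1 v2, inl2 v1 -> inl2 v2 ->
     A (fun x => a * v1 x + v2 x) = (fun x => a * A v1 x + A v2 x)) ->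
  (exists M : R, forall v, inl2 v -> l2norm (A v) <= M * l2norm v) ->
  (forall v1 v2, inl2 v1 -> inl2 v2 -> l2inner (A v1) v2 = l2inner v1 (A v2)) ->
  (forall v, inl2 v -> v <> (fun _ => 0) -> 0 < l2inner (A v) v) ->
  (* Ainv is the (bounded) inverse of A on l2(G) *)
  (forall v, inl2 v -> inl2 (Ainv v)) ->
  (forall v, inl2 v -> A (Ainv v) = v) ->
  (forall v, inl2 v -> Ainv (A v) = v) ->
  (exists M : R, forall v, inl2 v -> l2norm (Ainv v) <= M * l2norm v) ->
  (* f in l2, u solves A u = f *)
  inl2 f -> inl2 u -> A u = f ->
  (* parameters; kappa(A) = ||A|| ||A^-1|| *)
  let kappa := opnorm A * opnorm Ainv in
  0 < alpha -> alpha < (Num.sqrt kappa)^-1 ->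
  0 < lam ->
  alpha <= (Num.sqrt kappa)^-1 * Num.sqrt (1 - opnorm A * lam ^+ 2) ->
  (* w_Lambda supported in the finite product set Lambda *)
  (forall x, ~~ in_prod L0 L x -> w x = 0) ->
  (* compressibility of the contractions of u *)
  0 < s1 -> 0 < s2 ->
  inAs s1 (pi0 u) ->
  (forall k : 'I_J, inAs s2 (pij k u)) ->
  let r := fun x => A w x - f x in
  (* Lambda* is a minimizer of sum_j #(Lambda*_j \ Lambda_j) among the
     product sets satisfying the bulk criterion *)
  alpha * l2norm r <= l2norm (restr Ls0 Ls r) ->
  (forall (M0 : seq G0) (M : 'I_J -> seq nat),
     alpha * l2norm r <= l2norm (restr M0 M r) ->
     (prod_cost Ls0 Ls L0 L <= prod_cost M0 M L0 L)%N) ->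
  let C := (J.+1%:R) * Num.sqrt (opnorm A) / lam in
  (prod_cost Ls0 Ls L0 L)%:R <=
    2 * C `^ (s1^-1) * l2norm r `^ (- s1^-1) * fine (as_norm s1 (pi0 u)) `^ (s1^-1)
  + 2 * C `^ (s2^-1) * l2norm r `^ (- s2^-1)
      * \sum_(k < J) fine (as_norm s2 (pij k u)) `^ (s2^-1).
Proof.
move=> hJ Al2 Alin Ab Asym Apos Ail2 AAi AiA Aib hf hu Au kappa al0 al1 lam0 al2 hw
  s10 s20 hA1 hA2 r hLs hmin.
cbv zeta; set C := J.+1%:R * Num.sqrt (opnorm A) / lam.
have hwl : inl2 w.
  apply: (inl2_finset (finite_prod L0 L)) => x wx; apply/negPn/negP => hx.
  by move: wx; rewrite hw // eqxx.
set e := fun x => 1 * w x + (-1) * u x.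
have he : inl2 e by exact: inl2_lin.
have hr : r = A e.
  rewrite /r /e (Alin2 Alin) // -Au; apply/funext => x; ring.
set eps := l2norm r.
have [e0|eposn] := eqVneq eps 0.
  have : (prod_cost Ls0 Ls L0 L <= prod_cost L0 L L0 L)%N.
    by apply: hmin; rewrite -/eps e0 mulr0; exact: l2norm_ge0.
  have -> : prod_cost L0 L L0 L = 0%N.
    by rewrite /prod_cost card_diff_self big1 // => k _; exact: card_diff_self.
  rewrite leqn0 => /eqP ->.
  have p1 : - s1^-1 != 0 by rewrite oppr_eq0 invr_eq0 gt_eqF.
  have p2 : - s2^-1 != 0 by rewrite oppr_eq0 invr_eq0 gt_eqF.
  by rewrite e0 !powR0 // !mulr0 !mul0r addr0.
have epos : 0 < eps by rewrite lt0r eposn l2norm_ge0.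
have kpos : 0 < kappa.
  rewrite ltNge; apply/negP => k0; move: al1; rewrite (ler0_sqrtr k0) invr0.
  by move=> /(lt_trans al0); rewrite ltxx.
have a0 : 0 <= opnorm A by exact: (opnorm_ge0 Ab).
have c0 : 0 <= opnorm Ainv by exact: (opnorm_ge0 Aib).
have apos : 0 < opnorm A.
  rewrite lt_neqAle a0 andbT; apply/eqP => a0'; move: kpos; rewrite /kappa -a0' mul0r ltxx.
  by [].
set a := opnorm A.
have Cpos : 0 < C by rewrite /C divr_gt0 // mulr_gt0 ?ltr0n // sqrtr_gt0.
set delta := eps / C.
have d0 : 0 < delta by exact: divr_gt0.
have [sq0 [hsz0 hS0]] := approx s10 d0 hA1.
have hk0 := fun k => approx s20 d0 (hA2 k).
have /fin_all_exists [sqk hk] := hk0.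
set M0 := L0 ++ sq0.
set M := fun k => L k ++ sqk k.
have hRu : inl2 (restr M0 M u).
  case: (@inl2_dom R _ u (restr M0 M u) hu) => // x.
  by rewrite /restr; case: ifPn; rewrite ?expr0n ?sqr_ge0.
set y := fun x => w x - restr M0 M u x.
have hy : inl2 y by exact: inl2B.
have ysupp : forall x, ~~ in_prod M0 M x -> y x = 0.
  move=> x hx; rewrite /y /restr (negPf hx) subr0; apply: hw; apply: contra hx.
  move=> /andP[h1 /forallP h2]; apply/andP; split; first by rewrite mem_cat h1.
  by apply/forallP => k; rewrite mem_cat h2.
have huR : inl2 (fun x => u x - restr M0 M u x) by exact: inl2B.
have hey : S (fun x => e x - y x) = S (fun x => u x - restr M0 M u x).
  apply: S_eq; [exact: inl2B | exact: huR | move=> x; rewrite /e /y; ring].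
have hp0 : inl2 (pi0 u) by case: hA1.
have hpk : forall k, inl2 (pij k u) by move=> k; case: (hA2 k).
have o0 : inl2 (fun g => if g \in sq0 then 0 else pi0 u g) /\
    S (fun g => if g \in M0 then 0 else pi0 u g) <= S (fun g => if g \in sq0 then 0 else pi0 u g).
  have h1 : inl2 (fun g => if g \in sq0 then 0 else pi0 u g).
    case: (@inl2_dom R _ (pi0 u) (fun g => if g \in sq0 then 0 else pi0 u g) hp0) => // g.
    by case: ifPn; rewrite ?expr0n ?sqr_ge0.
  split => //; case: (@inl2_dom R _ _ (fun g => if g \in M0 then 0 else pi0 u g) h1) => // g.
  rewrite /M0 mem_cat; case: ifPn => //; first by rewrite expr0n sqr_ge0.
  by rewrite negb_or => /andP[_ /negPf ->].
have ok : forall k, inl2 (fun n => if n \in sqk k then 0 else pij k u n) /\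
    S (fun n => if n \in M k then 0 else pij k u n) <= S (fun n => if n \in sqk k then 0 else pij k u n).
  move=> k.
  have h1 : inl2 (fun n => if n \in sqk k then 0 else pij k u n).
    case: (@inl2_dom R _ (pij k u) (fun n => if n \in sqk k then 0 else pij k u n) (hpk k)) => // n.
    by case: ifPn; rewrite ?expr0n ?sqr_ge0.
  split => //; case: (@inl2_dom R _ _ (fun n => if n \in M k then 0 else pij k u n) h1) => // n.
  rewrite /M mem_cat; case: ifPn => //; first by rewrite expr0n sqr_ge0.
  by rewrite negb_or => /andP[_ /negPf ->].
have hM0 : inl2 (fun g => if g \in M0 then 0 else pi0 u g).
  case: (@inl2_dom R _ (pi0 u) (fun g => if g \in M0 then 0 else pi0 u g) hp0) => // g.
  by case: ifPn; rewrite ?expr0n ?sqr_ge0.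
have hMk : forall k, inl2 (fun n => if n \in M k then 0 else pij k u n).
  move=> k; case: (@inl2_dom R _ (pij k u) (fun n => if n \in M k then 0 else pij k u n) (hpk k)) => // n.
  by case: ifPn; rewrite ?expr0n ?sqr_ge0.
have dec : S (fun x => u x - restr M0 M u x) <=
    S (fun g => if g \in M0 then 0 else pi0 u g) +
    \sum_(k < J) S (fun n => if n \in M k then 0 else pij k u n).
  have := decomp M0 M hu; rewrite sqnormE // sqnormE //.
  under eq_bigr do rewrite sqnormE //.
  by rewrite sumEFin -EFinD lee_fin.
have hsum : \sum_(k < J) S (fun n => if n \in M k then 0 else pij k u n) <= J%:R * delta ^+ 2.
  have : \sum_(k < J) S (fun n => if n \in M k then 0 else pij k u n) <= \sum_(k < J) delta ^+ 2.
    apply: ler_sum => k _; apply: le_trans (proj2 (ok k)) _; exact: ltW (proj2 (hk k)).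
  by rewrite sumr_const card_ord mulr_natl.
have hSu : S (fun x => u x - restr M0 M u x) <= J.+1%:R * delta ^+ 2.
  have h0 : S (fun g => if g \in M0 then 0 else pi0 u g) <= delta ^+ 2.
    exact: le_trans (proj2 o0) (ltW hS0).
  rewrite -[J.+1]addn1 natrD; lra.
have hz : a * S (fun x => e x - y x) <= lam ^+ 2 * S (A e).
  rewrite hey -hr (_ : S r = eps ^+ 2); last by rewrite /eps l2normE.
  apply: le_trans (ler_wpM2l a0 hSu) _.
  have sa : Num.sqrt a ^+ 2 = a by rewrite sqr_sqrtr // ltW.
  have sa0 : 0 < Num.sqrt a by rewrite sqrtr_gt0.
  have -> : a * (J.+1%:R * delta ^+ 2) = lam ^+ 2 * eps ^+ 2 / J.+1%:R.
    rewrite /delta /C -sa; field.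
    have hJ1 : 0 < 1 + J%:R :> R by have := ler0n R J; lra.
    by apply/and3P; split; apply: lt0r_neq0.
  rewrite ler_pdivrMr ?ltr0n //; apply: ler_peMr; last by rewrite ler1n.
  by rewrite mulr_ge0 // sqr_ge0.
have hb := bulk Al2 Alin Ab Asym Apos Ail2 AAi AiA Aib he hy ysupp hz al0 al1 al2.
rewrite -hr in hb.
have hc := hmin M0 M hb.
have hcost : (prod_cost M0 M L0 L <= size sq0 + \sum_(k < J) size (sqk k))%N.
  rewrite /prod_cost leq_add ?card_diff_cat //; apply: leq_sum => k _; exact: card_diff_cat.
have asge0 : forall (H0 : countType) (s : R) (v : H0 -> R), 0 <= fine (as_norm s v).
  move=> H0 s v; apply: fine_ge0; apply: le_trans (ereal_sup_ubound _).
    2: by exists 0%N.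
  by rewrite lee_fin mulr_ge0 ?powR_ge0 ?bn_ge0.
have Xeq : forall (K p : R), 0 <= K ->
    (K / delta) `^ p = C `^ p * eps `^ (- p) * K `^ p.
  move=> K p K0.
  have -> : K / delta = C * eps^-1 * K.
    rewrite /delta; field; apply/andP; split; exact: lt0r_neq0.
  have C0 := ltW Cpos; have ei : 0 <= eps^-1 by rewrite invr_ge0 ltW.
  by rewrite (powRM _ (mulr_ge0 C0 ei) K0) (powRM _ C0 ei) powRV.
have T0 : (size sq0)%:R <= C `^ s1^-1 * eps `^ (- s1^-1) * fine (as_norm s1 (pi0 u)) `^ s1^-1.
  by rewrite -Xeq.
have T1 : \sum_(k < J) (size (sqk k))%:R <=
    C `^ s2^-1 * eps `^ (- s2^-1) * \sum_(k < J) fine (as_norm s2 (pij k u)) `^ s2^-1.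
  rewrite mulr_sumr; apply: ler_sum => k _; rewrite -Xeq //; exact: (proj1 (hk k)).
have Tc : (prod_cost Ls0 Ls L0 L)%:R <= (size sq0)%:R + \sum_(k < J) (size (sqk k))%:R :> R.
  by rewrite -natr_sum -natrD ler_nat; exact: leq_trans hc hcost.
have P0 : 0 <= C `^ s1^-1 * eps `^ (- s1^-1) * fine (as_norm s1 (pi0 u)) `^ s1^-1.
  by rewrite !mulr_ge0 ?powR_ge0.
have P1 : 0 <= C `^ s2^-1 * eps `^ (- s2^-1) * \sum_(k < J) fine (as_norm s2 (pij k u)) `^ s2^-1.
  by rewrite !mulr_ge0 ?powR_ge0 // sumr_ge0 // => k _; rewrite powR_ge0.
rewrite -!mulrA; lra.
Qed.
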